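(* Let $Q$ and $W$ satisfy the standing assumptions with $W=Y$, and let $l\ge1$. Then $\mathcal B(\hat Q^{l\triangledown})\subseteq\hat{\mathcal B}^l$.
   Context: Strings and signals: $\diamond$ is a symbol not in any other set considered. For a set $A$ and $l\in\mathbb N_0$, $A^l$ is the set of strings of length $l$ over $A$, indexed $\zeta=\zeta(0)\cdots\zeta(l-1)$. For a map $w$ on $\mathbb Z$ (or a string) and integers $t_1\le t_2$, $w|_{[t_1,t_2]}=w(t_1)\cdots w(t_2)$ is the string of length $t_2-t_1+1$ (absolute time forgotten). For a set $\mathcal S$ of such maps, $\mathcal S|_{[t_1,t_2]}=\{s|_{[t_1,t_2]}:s\in\mathcal S\}$. State machines: a state machine is $Q=(X,U,Y,\delta,X_0)$ with $X_0\subseteq X$, $\delta\subseteq X\times U\times Y\times X$. Let $H_\delta(x)=\{y:\exists u,x'.\,(x,u,y,x')\in\delta\}$, $F_\delta(x,u)=\{x':\exists y\in H_\delta(x).\,(x,u,y,x')\in\delta\}$. The full behavior $\mathcal B_f(Q)$ is the set of $(\mu,\nu,\xi)\in(U\times Y\times X)^{\mathbb N_0}$ with $\xi(0)\in X_0$ and $(\xi(k),\mu(k),\nu(k),\xi(k+1))\in\delta$ for all $k\in\mathbb N_0$. $Q$ is live and reachable if every $x\in X_0$ is $\xi(0)$ for some $(\mu,\nu,\xi)\in\mathcal B_f(Q)$ and every $x\in X$ is $\xi(k)$ for some such trajectory and some $k$. Standing assumptions: $Q=(X,U,Y,\delta,X_0)$ is live and reachable and satisfies $(x,u,y,x')\in\delta\iff(x'\in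 F_\delta(x,u)\wedge y\in H_\delta(x))$ for all $x,x'\in X,u\in U,y\in Y$; the external signal space $W$ is finite and either $W=U\times Y$ or $W=Y$ (here $W=Y$, with $\pi_Y(u,y)=y$). Behaviors: for a state machine $Q'$ with input set $U$ and output set $Y$, $\mathcal B(Q')$ is the set of $w:\mathbb Z\to Y\cup\{\diamond\}$ such that for some $(\mu,\nu,\xi)\in\mathcal B_f(Q')$, $w(k)=\diamond$ for $k<0$ and $w(k)=\nu(k)$ for $k\ge0$. $\mathcal B_S(Q)$ is the set of pairs $(w,\xi)$ of maps on $\mathbb Z$ with $w(k)=\xi(k)=\diamond$ for $k<0$ and $(w(k),\xi(k))=(\nu(k),\xi'(k))$ for $k\ge0$, for some $(\mu,\nu,\xi')\in\mathcal B_f(Q)$. For a set $\mathcal B$ of maps on $\mathbb Z$, $\Pi_l(\mathcal B)=\bigcup_{k\in\mathbb N_0}\mathcal B|_{[k-l+1,k]}$. SAlCA: for $l\in\mathbb N_0$, $\hat{\mathcal B}^l$ is the set of $w:\mathbb Z\to W\cup\{\diamond\}$ with $w(k)=\diamond$ for $k<0$, $w(k)\in W$ for $k\ge0$, $w|_{[-l,0]}\in\mathcal B(Q)|_{[-l,0]}$ and $w|_{[k-l,k]}\in\Pi_{l+1}(\mathcal B(Q))$ for all $k\in\mathbb N_0$. Corresponding strings: for integers $a,b$ and $x\in X$, $E^{[a,b]}(x)=\{\zeta:\exists(w,\xi)\in\mathcal B_S(Q),k\in\mathbb N_0:\ \xi(k)=x,\ \zeta=w|_{[k+a,k+b]}\}$;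 $I^l_l=[0,l-1]$. Quotient state machine (for $W=Y$): $\hat Q^{l\triangledown}=(\hat X^{l\triangledown},U,Y,\hat\delta^{l\triangledown},\hat X^{l\triangledown}_0)$ with $\hat X^{l\triangledown}=\{E^{I^l_l}(x):x\in X\}$ (a set of subsets of $Y^l$), $\hat X^{l\triangledown}_0=\{E^{I^l_l}(x):x\in X_0\}$, and $(\hat x,u,y,\hat x')\in\hat\delta^{l\triangledown}$ iff there exist $x,x'\in X$ with $\hat x=E^{I^l_l}(x)$, $\hat x'=E^{I^l_l}(x')$ and $(x,u,y,x')\in\delta$. *)

(* Defs.v *)
From Stdlib Require Import ZArith List.
Import ListNotations.
Open Scope Z_scope.

Record SM (X U Y : Type) := mkSM {
  sm_delta : X -> U -> Y -> X -> Prop;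
  sm_X0 : X -> Prop }.
Arguments sm_delta {X U Y}.
Arguments sm_X0 {X U Y}.

Definition Hd {X U Y} (Q : SM X U Y) (x : X) (y : Y) : Prop :=
  exists u x', sm_delta Q x u y x'.
Definition Fd {X U Y} (Q : SM X U Y) (x : X) (u : U) (x' : X) : Prop :=
  exists y, Hd Q x y /\ sm_delta Q x u y x'.

Definition Bf {X U Y} (Q : SM X U Y)
  (mu : nat -> U) (nu : nat -> Y) (xi : nat -> X) : Prop :=
  sm_X0 Q (xi O) /\ forall k : nat, sm_delta Q (xi k) (mu k) (nu k) (xi (S k)).

Definition live_reachable {X U Y} (Q : SM X U Y) : Prop :=
  (forall x, sm_X0 Q x -> exists mu nu xi, Bf Q mu nu xi /\ xi O = x) /\
  (forall x : X, exists mu nu xi k, Bf Q mu nu xi /\ xi k = x).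

Definition standing_delta {X U Y} (Q : SM X U Y) : Prop :=
  forall x u y x', sm_delta Q x u y x' <-> (Fd Q x u x' /\ Hd Q x y).

Definition finite_type (T : Type) : Prop := exists l : list T, forall t, In t l.

(* Signals on Z; the diamond symbol is None. *)
Definition signal (A : Type) := Z -> option A.

(* w|_[t1,t2] : string of length t2 - t1 + 1 (empty if t2 < t1) *)
Definition restrict {A} (w : signal A) (t1 t2 : Z) : list (option A) :=
  map (fun i : nat => w (t1 + Z.of_nat i)) (seq 0 (Z.to_nat (t2 - t1 + 1))).

Definition restrictSet {A} (S : signal A -> Prop) (t1 t2 : Z)
  (z : list (option A)) : Prop :=
  exists s, S s /\ z = restrict s t1 t2.

Definition Beh {X U Y} (Q : SM X U Y) (w : signal Y) : Prop :=
  exists mu nu xi, Bf Q mu nu xi /\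
    (forall k, k < 0 -> w k = None) /\
    (forall k, 0 <= k -> w k = Some (nu (Z.to_nat k))).

Definition BS {X U Y} (Q : SM X U Y) (w : signal Y) (xs : signal X) : Prop :=
  exists mu nu xi, Bf Q mu nu xi /\
    (forall k, k < 0 -> w k = None /\ xs k = None) /\
    (forall k, 0 <= k -> w k = Some (nu (Z.to_nat k)) /\
                         xs k = Some (xi (Z.to_nat k))).

Definition Pi {A} (l : nat) (B : signal A -> Prop) (z : list (option A)) : Prop :=
  exists k : nat, restrictSet B (Z.of_nat k - Z.of_nat l + 1) (Z.of_nat k) z.

Definition SAlCA {X U Y} (Q : SM X U Y) (l : nat) (w : signal Y) : Prop :=
  (forall k, k < 0 -> w k = None) /\
  (forall k, 0 <= k -> w k <> None) /\
  restrictSet (Beh Q) (- Z.of_nat l) 0 (restrict w (- Z.of_nat l) 0) /\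
  (forall k : nat, Pi (S l) (Beh Q)
      (restrict w (Z.of_nat k - Z.of_nat l) (Z.of_nat k))).

Definition Ecorr {X U Y} (Q : SM X U Y) (a b : Z) (x : X)
  (z : list (option Y)) : Prop :=
  exists w xs (k : nat), BS Q w xs /\ xs (Z.of_nat k) = Some x /\
    z = restrict w (Z.of_nat k + a) (Z.of_nat k + b).

Definition Eset {X U Y} (Q : SM X U Y) (l : nat) (x : X) : list (option Y) -> Prop :=
  Ecorr Q 0 (Z.of_nat l - 1) x.

(* Quotient state machine \hat Q^{l triangledown}; states are subsets of strings.
   Only states of the form E(x) occur in the initial set and transition relation. *)
Definition quotientSM {X U Y} (Q : SM X U Y) (l : nat)
  : SM (list (option Y) -> Prop) U Y :=
  mkSM _ U Y
    (fun hx u y hx' => exists x x', hx = Eset Q l x /\ hx' = Eset Q l x' /\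
                                    sm_delta Q x u y x')
    (fun hx => exists x, sm_X0 Q x /\ hx = Eset Q l x).

(* Main.v *)
Require Import Defs.
From Stdlib Require Import ZArith List Lia.

Definition glue {A} (k : nat) (f g : nat -> A) (i : nat) : A :=
  if Nat.ltb i k then f i else g (i - k)%nat.

Definition Run {X U Y} (Q : SM X U Y) x (mu : nat -> U) (nu : nat -> Y) (xi : nat -> X) :=
  xi O = x /\ forall k, sm_delta Q (xi k) (mu k) (nu k) (xi (S k)).

Lemma glue_run {X U Y} (Q : SM X U Y) a mu nu xi k x mu' nu' xi' :
  xi O = a -> (forall i, (i < k)%nat -> sm_delta Q (xi i) (mu i) (nu i) (xi (S i))) ->
  xi k = x -> Run Q x mu' nu' xi' ->
  Run Q a (glue k mu mu') (glue k nu nu') (glue k xi xi').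
Proof.
  intros H0 Hp Hk [HR0 HRs]. split.
  - unfold glue. destruct (Nat.ltb_spec 0 k); [assumption|].
    replace k with 0%nat in * by lia. simpl. congruence.
  - intro i. unfold glue. destruct (Nat.ltb_spec i k), (Nat.ltb_spec (S i) k).
    + apply Hp; auto.
    + replace (S i - k)%nat with 0%nat by lia. rewrite HR0, <- Hk.
      replace k with (S i) by lia. apply Hp; lia.
    + lia.
    + replace (S i - k)%nat with (S (i - k)) by lia. apply HRs.
Qed.

Lemma tail_run {X U Y} (Q : SM X U Y) a mu nu xi k :
  Run Q a mu nu xi ->
  Run Q (xi k) (fun i => mu (k+i)%nat) (fun i => nu (k+i)%nat) (fun i => xi (k+i)%nat).
Proof.
  intros [H0 Hs]. split.
  - rewrite Nat.add_0_r. reflexivity.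
  - intro i. replace (k + S i)%nat with (S (k+i)) by lia. apply Hs.
Qed.

Definition G {X U Y} (Q : SM X U Y) x n (f : nat -> Y) :=
  exists mu nu xi, Run Q x mu nu xi /\ forall i, (i < n)%nat -> nu i = f i.

Lemma G_zero {X U Y} (Q : SM X U Y) (Hlr : live_reachable Q) x f : G Q x 0 f.
Proof.
  destruct (proj2 Hlr x) as (mu & nu & xi & k & [_ Hs] & Hk).
  exists (fun i => mu (k+i)%nat), (fun i => nu (k+i)%nat), (fun i => xi (k+i)%nat).
  split; [|intros; lia]. rewrite <- Hk. apply (tail_run Q (xi O)). split; auto.
Qed.

Lemma G_ext {X U Y} (Q : SM X U Y) x n f g :
  (forall i, (i < n)%nat -> f i = g i) -> G Q x n f -> G Q x n g.
Proof.
  intros He (mu & nu & xi & HR & Hf). exists mu, nu, xi. split; auto.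
  intros i Hi. rewrite Hf; auto.
Qed.

Lemma G_step {X U Y} (Q : SM X U Y) x u y x' n f :
  sm_delta Q x u y x' -> G Q x' n f ->
  G Q x (S n) (fun i => match i with O => y | S i' => f i' end).
Proof.
  intros D (mu & nu & xi & HR & Hf).
  exists (glue 1 (fun _ => u) mu), (glue 1 (fun _ => y) nu),
    (glue 1 (fun i => match i with O => x | _ => x' end) xi).
  split.
  - eapply glue_run with (x := x'); auto.
    intros i Hi. replace i with 0%nat by lia. exact D.
  - intros i Hi. unfold glue. destruct i; simpl; [reflexivity|].
    rewrite Nat.sub_0_r. apply Hf. lia.
Qed.

Lemma G_reach_Bf {X U Y} (Q : SM X U Y) mu nu xi k x n f :
  Bf Q mu nu xi -> xi k = x -> G Q x n f ->
  exists mu' nu' xi', Bf Q mu' nu' xi' /\ xi' k = x /\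
    forall i, (i < n)%nat -> nu' (k+i)%nat = f i.
Proof.
  intros [HX Hs] Hk (mu1 & nu1 & xi1 & HR & Hf).
  assert (HG := glue_run Q (xi O) mu nu xi k x mu1 nu1 xi1 eq_refl
                  (fun i _ => Hs i) Hk HR).
  exists (glue k mu mu1), (glue k nu nu1), (glue k xi xi1). split; [|split].
  - split; [rewrite (proj1 HG); exact HX | exact (proj2 HG)].
  - unfold glue. destruct (Nat.ltb_spec k k); [lia|].
    rewrite Nat.sub_diag. apply (proj1 HR).
  - intros i Hi. unfold glue. destruct (Nat.ltb_spec (k+i) k); [lia|].
    replace (k + i - k)%nat with i by lia. apply Hf; auto.
Qed.

Definition sig {A} (f : nat -> A) : signal A :=
  fun z => if Z.ltb z 0 then None else Some (f (Z.to_nat z)).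

Lemma BS_of_Bf {X U Y} (Q : SM X U Y) mu nu xi :
  Bf Q mu nu xi -> BS Q (sig nu) (sig xi).
Proof.
  intros HB. exists mu, nu, xi. split; auto. unfold sig.
  split; intros k Hk; destruct (Z.ltb_spec k 0); try lia; auto.
Qed.

Lemma Beh_of_Bf {X U Y} (Q : SM X U Y) mu nu xi :
  Bf Q mu nu xi -> Beh Q (sig nu).
Proof.
  intros HB. exists mu, nu, xi. split; auto. unfold sig.
  split; intros k Hk; destruct (Z.ltb_spec k 0); try lia; auto.
Qed.

Lemma BS_inv {X U Y} (Q : SM X U Y) w xs :
  BS Q w xs -> exists mu nu xi, Bf Q mu nu xi /\
    forall n : nat, w (Z.of_nat n) = Some (nu n) /\ xs (Z.of_nat n) = Some (xi n).
Proof.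
  intros (mu & nu & xi & HB & _ & Hp). exists mu, nu, xi. split; auto.
  intro n. rewrite <- (Nat2Z.id n) at 2 4. apply Hp. lia.
Qed.

Lemma restrict_nth {A} (w : signal A) a b i :
  (i < Z.to_nat (b - a + 1))%nat -> nth i (restrict w a b) None = w (a + Z.of_nat i).
Proof.
  intros Hi. unfold restrict.
  rewrite nth_indep with (d' := (fun j : nat => w (a + Z.of_nat j)) 0%nat).
  - rewrite (map_nth (fun j : nat => w (a + Z.of_nat j))), seq_nth by auto. reflexivity.
  - rewrite length_map, length_seq. auto.
Qed.

Lemma restrict_ext2 {A} (s w : signal A) a b c d :
  c - a = d - b ->
  (forall i : nat, (i < Z.to_nat (c - a + 1))%nat -> s (a + Z.of_nat i) = w (b + Z.of_nat i)) ->
  restrict s a c = restrict w b d.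
Proof.
  intros He H. unfold restrict. rewrite <- He. apply map_ext_in.
  intros i Hi. apply in_seq in Hi. apply H. lia.
Qed.

Lemma transfer {X U Y} (Q : SM X U Y) (Hlr : live_reachable Q) l x x' n f :
  Eset Q l x = Eset Q l x' -> (n <= l)%nat -> G Q x n f -> G Q x' n f.
Proof.
  intros HE Hn HGx.
  destruct (proj2 Hlr x) as (mu & nu & xi & k & HB & Hk).
  destruct (G_reach_Bf Q mu nu xi k x n f HB Hk HGx) as (mu1 & nu1 & xi1 & HB1 & Hk1 & Hn1).
  set (z0 := restrict (sig nu1) (Z.of_nat k + 0) (Z.of_nat k + (Z.of_nat l - 1))).
  assert (HE0 : Eset Q l x z0).
  { exists (sig nu1), (sig xi1), k. split; [apply (BS_of_Bf Q mu1); auto|]. split; [|reflexivity].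
    unfold sig. destruct (Z.ltb_spec (Z.of_nat k) 0); [lia|]. rewrite Nat2Z.id, Hk1. reflexivity. }
  rewrite HE in HE0. destruct HE0 as (w2 & xs2 & k2 & HBS & Hx2 & Hz).
  destruct (BS_inv Q w2 xs2 HBS) as (mu2 & nu2 & xi2 & HB2 & Hw2).
  assert (Hxk2 : xi2 k2 = x').
  { destruct (Hw2 k2) as [_ H2]. rewrite Hx2 in H2. congruence. }
  exists (fun i => mu2 (k2+i)%nat), (fun i => nu2 (k2+i)%nat), (fun i => xi2 (k2+i)%nat).
  split.
  - rewrite <- Hxk2. apply (tail_run Q (xi2 O)). split; [reflexivity| apply (proj2 HB2)].
  - intros i Hi.
    assert (Hnth : nth i z0 None = nth i (restrict w2 (Z.of_nat k2 + 0) (Z.of_nat k2 + (Z.of_nat l - 1))) None)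
      by (rewrite Hz; reflexivity).
    unfold z0 in Hnth. rewrite !restrict_nth in Hnth by lia.
    replace (Z.of_nat k + 0 + Z.of_nat i) with (Z.of_nat (k + i)) in Hnth by lia.
    replace (Z.of_nat k2 + 0 + Z.of_nat i) with (Z.of_nat (k2 + i)) in Hnth by lia.
    rewrite (proj1 (Hw2 _)) in Hnth. unfold sig in Hnth.
    destruct (Z.ltb_spec (Z.of_nat (k+i)) 0); [lia|]. rewrite Nat2Z.id in Hnth.
    rewrite <- Hn1 by lia. congruence.
Qed.

Theorem theorem8 (X U Y : Type) (Q : SM X U Y)
  (HY : finite_type Y) (Hlr : live_reachable Q) (Hst : standing_delta Q)
  (l : nat) (hl : (1 <= l)%nat) :
  forall w : signal Y, Beh (quotientSM Q l) w -> SAlCA Q l w.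
Proof.
  intros w (mu & nu & hxi & [HX0 Hd] & Hneg & Hpos).
  simpl in HX0, Hd.
  assert (C : forall m, (m < l)%nat -> forall j x, hxi j = Eset Q l x ->
             G Q x (S m) (fun i => nu (j + i)%nat)).
  { induction m; intros Hm j x Hj; destruct (Hd j) as (x1 & x1' & E1 & E2 & D).
    - apply transfer with (l := l) (x := x1); [auto|congruence|lia|].
      eapply G_ext; [| apply (G_step Q x1 (mu j) (nu j) x1') with (f := fun i => nu (S j + i)%nat) (n := 0%nat);
                       [exact D | apply G_zero; auto]].
      intros i Hi. destruct i; [f_equal; lia | lia].
    - apply transfer with (l := l) (x := x1); [auto|congruence|lia|].
      eapply G_ext; [| apply (G_step Q x1 (mu j) (nu j) x1') with (f := fun i => nu (S j + i)%nat) (n := S m);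
                       [exact D | apply IHm; auto; lia]].
      intros i Hi. destruct i; f_equal; lia. }
  assert (Key : forall k : nat, (k < l)%nat -> exists s, Beh Q s /\
            restrict s (Z.of_nat k - Z.of_nat l) (Z.of_nat k)
            = restrict w (Z.of_nat k - Z.of_nat l) (Z.of_nat k)).
  { intros k Hk. destruct HX0 as (x0 & HX & E0).
    destruct (C k ltac:(lia) 0%nat x0 E0) as (mu1 & nu1 & xi1 & [HR0 HRs] & Hf).
    assert (HB : Bf Q mu1 nu1 xi1) by (split; [rewrite HR0; auto | auto]).
    exists (sig nu1). split; [eapply Beh_of_Bf; eauto|].
    apply restrict_ext2; [reflexivity|]. intros i Hi. unfold sig.
    destruct (Z.ltb_spec (Z.of_nat k - Z.of_nat l + Z.of_nat i) 0).
    - rewrite Hneg; auto.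
    - rewrite Hpos by lia. f_equal. apply Hf. lia. }
  split; [exact Hneg|]. split; [intros k Hk; rewrite Hpos by auto; discriminate|]. split.
  - destruct (Key 0%nat ltac:(lia)) as (s & Hs & Heq). exists s. split; [exact Hs|].
    simpl in Heq |- *. congruence.
  - intro k. destruct (Nat.lt_ge_cases k l) as [Hkl|Hkl].
    + destruct (Key k Hkl) as (s & Hs & Heq). exists k, s. split; auto.
      replace (Z.of_nat k - Z.of_nat (S l) + 1) with (Z.of_nat k - Z.of_nat l) by lia.
      rewrite Heq. reflexivity.
    + destruct (Hd (k - l)%nat) as (x1 & x1' & E1 & _ & _).
      destruct (Hd (k - l)%nat) as (y1 & y1' & F1 & F2 & D).
      assert (Hl' : exists l', l = S l') by (exists (pred l); lia). destruct Hl' as [l' Hl'].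
      assert (HG0 := C l' ltac:(lia) (S (k - l)) y1' F2).
      assert (HG1 := G_step Q y1 (mu (k - l)%nat) (nu (k - l)%nat) y1' _ _ D HG0).
      assert (HG : G Q y1 (S l) (fun i => nu (k - l + i)%nat)).
      { rewrite Hl'. eapply G_ext; [|exact HG1]. intros i Hi. destruct i; f_equal; lia. }
      destruct (proj2 Hlr y1) as (mu0 & nu0 & xi0 & k0 & HB0 & Hk0).
      destruct (G_reach_Bf Q mu0 nu0 xi0 k0 y1 _ _ HB0 Hk0 HG) as (mu1 & nu1 & xi1 & HB1 & _ & Hn1).
      exists (k0 + l)%nat, (sig nu1). split; [eapply Beh_of_Bf; eauto|].
      symmetry. apply restrict_ext2; [lia|]. intros i Hi.
      replace (Z.of_nat k - Z.of_nat l + Z.of_nat i) with (Z.of_nat (k - l + i)) by lia.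
      replace (Z.of_nat (k0 + l) - Z.of_nat (S l) + 1 + Z.of_nat i) with (Z.of_nat (k0 + i)) by lia.
      rewrite Hpos by lia. unfold sig. destruct (Z.ltb_spec (Z.of_nat (k0 + i)) 0); [lia|].
      rewrite !Nat2Z.id. rewrite Hn1 by lia. reflexivity.
Qed.
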